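(* Let $B_J\in\mathbb R^{n\times n}$ satisfy $\|B_J\|_1<1$ (strict diagonal dominance by columns), and let $\mathcal B$ be any splitting of $B_J$. Then $\rho(T(\mathcal B))<1$, so the associated iterative scheme converges.
   Context: For $B\in\mathbb R^{n\times n}$, a splitting of $B$ of order $d\ge1$ is an ordered $d$-tuple $\mathcal B=(B_1,\dots,B_d)$ of real $n\times n$ matrices with $B_p\neq O$ for all $p$, $\sum_{p=1}^d B_p=B$, and $B_p\circ B_q=O$ (Hadamard product) for $p\ne q$. The iteration matrix of $\mathcal B$ is the $dn\times dn$ matrix $T(\mathcal B)=(I_{dn}-\mathcal L)^{-1}\mathcal U$, where $\mathcal L,\mathcal U$ are $d\times d$ block matrices with $n\times n$ blocks, $\mathcal L_{ij}=B_j$ if $i>j$ and $O$ otherwise, $\mathcal U_{ij}=B_j$ if $i\le j$ and $O$ otherwise. $\rho$ is spectral radius, $\|\cdot\|_1$ the maximum-column-sum norm. *)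

(* Defs.v *)
From HB Require Import structures.
From mathcomp Require Import all_boot all_order all_algebra.
From mathcomp Require Import complex.
From mathcomp Require Import reals.

Set Implicit Arguments.
Unset Strict Implicit.
Unset Printing Implicit Defensive.

Import Order.TTheory GRing.Theory Num.Theory.
Local Open Scope ring_scope.

Definition mx_norm1 (R : realType) (n : nat) (B : 'M[R]_n) : R :=
  \big[Num.max/0]_(j < n) \sum_(i < n) `|B i j|.

Definition hadamard (R : realType) (n : nat) (A B : 'M[R]_n) : 'M[R]_n :=
  \matrix_(i, j) (A i j * B i j).

Definition is_splitting (R : realType) (n d : nat) (B : 'M[R]_n)
    (Bs : 'I_d -> 'M[R]_n) : Prop :=
  [/\ (0 < d)%N,
      (forall p, Bs p != 0),
      \sum_(p < d) Bs p = B &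
      (forall p q, p != q -> hadamard (Bs p) (Bs q) = 0)].

(* Block matrices L and U (d x d blocks of size n x n); the index type is
   \sum_(p < d) n, i.e. dn. *)
Definition split_L (R : realType) (n d : nat) (Bs : 'I_d -> 'M[R]_n)
    : 'M[R]_(\sum_(p < d) n) :=
  mxblock (fun (i j : 'I_d) => if (j < i)%N then Bs j else (0 : 'M[R]_n)).

Definition split_U (R : realType) (n d : nat) (Bs : 'I_d -> 'M[R]_n)
    : 'M[R]_(\sum_(p < d) n) :=
  mxblock (fun (i j : 'I_d) => if (i <= j)%N then Bs j else (0 : 'M[R]_n)).

Definition iter_mx (R : realType) (n d : nat) (Bs : 'I_d -> 'M[R]_n)
    : 'M[R]_(\sum_(p < d) n) :=
  invmx (1%:M - split_L Bs) *m split_U Bs.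

Definition spectral_radius_lt1 (R : realType) (m : nat) (A : 'M[R]_m) : Prop :=
  forall lambda : complex R,
    eigenvalue (map_mx (fun x : R => (x%:C)%C) A) lambda -> `|lambda| < 1.

(* Main.v *)
Require Import Defs.
From HB Require Import structures.
From mathcomp Require Import all_boot all_order all_algebra.
From mathcomp Require Import complex.
From mathcomp Require Import reals.
From mathcomp Require Import lra.
Import Order.TTheory GRing.Theory Num.Theory.
Import ComplexField.Normc.
Local Open Scope ring_scope.

Definition s1 {d n : nat} (s : 'I_(\sum_(p < d) n)) : 'I_d := @tagnat.sig1 d (fun _ => n) s.
Definition s2 {d n : nat} (s : 'I_(\sum_(p < d) n)) : 'I_n := @tagnat.sig2 d (fun _ => n) s.
Definition rk {d n : nat} (p : 'I_d) (a : 'I_n) : 'I_(\sum_(p < d) n) :=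
  @tagnat.Rank d (fun _ => n) p a.

Lemma s1_rk d n (p : 'I_d) (a : 'I_n) : s1 (rk p a) = p.
Proof. exact: tagnat.Rank1K. Qed.
Lemma s2_rk d n (p : 'I_d) (a : 'I_n) : s2 (rk p a) = a.
Proof. by apply/val_inj; rewrite /s2 /rk tagnat.Rank2K. Qed.
Lemma rk_s d n (s : 'I_(\sum_(p < d) n)) : rk (s1 s) (s2 s) = s.
Proof. exact: tagnat.sig2K. Qed.

Lemma sum_rk (V : nmodType) d n (F : 'I_(\sum_(p < d) n) -> V) :
  \sum_s F s = \sum_(p < d) \sum_(a < n) F (rk p a).
Proof.
rewrite (sig_big_dep (fun p : 'I_d => true) (fun p (a : 'I_n) => true) (fun p a => F (rk p a))) /=.
rewrite (reindex (@tagnat.rank d (fun _ => n))) /=; last exact: tagnat.rank_bij_on.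
by apply: eq_bigr => -[p a] _; rewrite tagnat.rankE.
Qed.
Lemma normc_ge0 (R : realType) (x : complex R) : 0 <= normc x.
Proof. by case: x => a b /=; rewrite sqrtr_ge0. Qed.

Lemma normcR (R : realType) (x : R) : normc ((x%:C)%C) = `|x|.
Proof. by rewrite /= expr0n /= addr0 sqrtr_sqr. Qed.

Lemma normc_sum (R : realType) (I : Type) (r : seq I) (P : pred I) (F : I -> complex R) :
  normc (\sum_(i <- r | P i) F i) <= \sum_(i <- r | P i) normc (F i).
Proof.
elim/big_ind2: _ => //; first by rewrite normc0.
by move=> x1 x2 y1 y2 h1 h2; apply: le_trans (le_normcD _ _) (lerD h1 h2).
Qed.

Lemma normc_lt1 (R : realType) (x : complex R) : (`|x| < 1) = (normc x < 1).
Proof. by case: x => a b; rewrite normc_def /= -[1]/((1%:C)%C) ltcR. Qed.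

Lemma abs_split (R : realType) n d (BJ : 'M[R]_n) (Bs : 'I_d -> 'M[R]_n) :
  is_splitting BJ Bs -> forall a b, \sum_q `|Bs q a b| = `|BJ a b|.
Proof.
case=> _ _ hsum hdis a b.
have E : BJ a b = \sum_q Bs q a b by rewrite -hsum summxE.
have Z : forall p q, p != q -> Bs p a b * Bs q a b = 0.
  by move=> p q /hdis/matrixP/(_ a b); rewrite !mxE.
case: (pickP (fun q => Bs q a b != 0)) => [q0 nz|none].
  have Z0 : forall q, q != q0 -> Bs q a b = 0.
    move=> q hq; have := Z q0 q; rewrite eq_sym hq => /(_ isT) /eqP.
    by rewrite mulf_eq0 (negbTE nz) /= => /eqP.
  rewrite E (bigD1 q0) //= [in RHS](bigD1 q0) //=.
  rewrite !big1 ?addr0 // => q hq; rewrite Z0 //; exact: normr0.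
rewrite E !big1 ?normr0 // => q _; have := none q; rewrite /= => /negbFE/eqP ->;
  by rewrite ?normr0.
Qed.

Lemma key (R : realType) n d (BJ : 'M[R]_n) (Bs : 'I_d -> 'M[R]_n) :
  mx_norm1 BJ < 1 -> is_splitting BJ Bs ->
  forall (w : 'rV[complex R]_(\sum_(p < d) n)) (lam : complex R)
    (c : 'I_d -> 'I_d -> complex R),
  (forall p q, normc (c p q) <= normc lam) -> lam != 0 ->
  (forall t, lam * w 0 t =
     \sum_s w 0 s * (c (s1 s) (s1 t) * ((Bs (s1 t) (s2 s) (s2 t))%:C)%C)) ->
  w = 0.
Proof.
move=> hn hs w lam c hc lam0 heq.
pose W p a := w 0 (rk p a).
pose sv a := \sum_(p < d) normc (W p a).
have lamp : 0 < normc lam.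
  rewrite lt_def normc_ge0 andbT; apply/eqP => /eq0_normc /eqP.
  by rewrite (negbTE lam0).
have C1 : forall q b, normc (W q b) <= \sum_a sv a * `|Bs q a b|.
  move=> q b; rewrite -(ler_pM2l lamp) -normcM /W heq.
  apply: le_trans; first exact: normc_sum.
  rewrite sum_rk /sv mulr_sumr.
  under [X in _ <= X]eq_bigr do rewrite mulr_suml mulr_sumr.
  rewrite [X in _ <= X]exchange_big /=.
  apply: ler_sum => p _; apply: ler_sum => a _.
  rewrite !s1_rk !s2_rk !normcM normcR.
  rewrite /W [X in _ <= X]mulrCA; apply: ler_wpM2l; first exact: normc_ge0.
  by apply: ler_wpM2r; [exact: normr_ge0 | exact: hc].
have C2 : forall b, sv b <= \sum_a sv a * `|BJ a b|.
  move=> b; apply: le_trans (ler_sum _ (fun q _ => C1 q b)) _.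
  rewrite exchange_big /=; apply: ler_sum => a _.
  by rewrite -mulr_sumr (@abs_split _ _ _ _ _ hs).
have sv0 : forall a, 0 <= sv a by move=> a; apply: sumr_ge0 => p _; exact: normc_ge0.
pose S := \big[Num.max/0]_a sv a.
have svS : forall a, sv a <= S by move=> a; exact: le_bigmax.
have ge0max : forall (F : 'I_n -> R), (forall a, 0 <= F a) -> 0 <= \big[Num.max/0]_a F a.
  by move=> F hF; elim/big_ind: _ => // x y hx hy; rewrite le_max hx.
have S0 : 0 <= S by exact: ge0max.
pose nu := mx_norm1 BJ.
have nu0 : 0 <= nu by apply: ge0max => a; apply: sumr_ge0 => i _; exact: normr_ge0.
have colb : forall b, \sum_a `|BJ a b| <= nu.
  by move=> b; exact: (le_bigmax _ (fun j => \sum_i `|BJ i j|) b).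
have SS : S <= S * nu.
  apply: bigmax_le; first by rewrite mulr_ge0.
  move=> b _; apply: le_trans (C2 b) _.
  apply: le_trans (_ : \sum_a S * `|BJ a b| <= _).
    by apply: ler_sum => a _; apply: ler_wpM2r; [exact: normr_ge0 | exact: svS].
  by rewrite -mulr_sumr; apply: ler_wpM2l.
have hnu : nu < 1 by [].
have SL : S <= 0 by nra.
have Wz : forall p a, W p a = 0.
  move=> p a; apply: eq0_normc; apply/eqP; rewrite eq_le normc_ge0 andbT.
  apply: le_trans (le_trans (svS a) SL).
  by rewrite /sv (bigD1 p) //= lerDl sumr_ge0 // => i _; exact: normc_ge0.
apply/rowP => t; rewrite mxE -[t]rk_s; exact: Wz.
Qed.

Theorem proposition4p2 (R : realType) (n d : nat) (BJ : 'M[R]_n)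
    (Bs : 'I_d -> 'M[R]_n) :
  mx_norm1 BJ < 1 -> is_splitting BJ Bs -> spectral_radius_lt1 (iter_mx Bs).
Proof.
move=> hn hs lam /eigenvalueP [v hv v0].
rewrite normc_lt1 ltNge; apply/negP => hl.
have Ef : (fun x : R => (x%:C)%C) = real_complex R by [].
rewrite Ef /iter_mx map_mxM map_invmx map_mxB map_mx1 in hv.
set Lc := map_mx (real_complex R) (split_L Bs) in hv.
set Uc := map_mx (real_complex R) (split_U Bs) in hv.
have LcE : forall s t, Lc s t = (if (s1 t < s1 s)%N then 1 else 0) * ((Bs (s1 t) (s2 s) (s2 t))%:C)%C.
  move=> s t; rewrite /Lc /split_L /mxblock !mxE /s1 /s2.
  by case: ifP => _; rewrite ?mxE ?mul1r ?mul0r ?rmorph0.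
have UcE : forall s t, Uc s t = (if (s1 t < s1 s)%N then 0 else 1) * ((Bs (s1 t) (s2 s) (s2 t))%:C)%C.
  move=> s t; rewrite /Uc /split_U /mxblock !mxE /s1 /s2 leqNgt.
  by rewrite if_neg; case: ifP => _; rewrite ?mxE ?mul1r ?mul0r ?rmorph0.
have unitA : (1%:M - Lc) \in unitmx.
  rewrite -row_free_unit -kermx_eq0; apply/eqP/row_matrixP => i; rewrite row0.
  set u := row i _.
  have hk : u *m (1%:M - Lc) = 0 by apply/sub_kermxP; exact: row_sub.
  have hu : u = u *m Lc.
    by apply/eqP; rewrite -subr_eq0 -{1}(mulmx1 u) -mulmxBr hk.
  apply: (@key _ _ _ _ _ hn hs u 1 (fun p q => if (q < p)%N then 1 else 0)).
  - by move=> p q; case: ifP => _; rewrite ?normc1 ?normc0 ?ler01.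
  - exact: oner_neq0.
  - move=> t; rewrite mul1r {1}hu mxE; apply: eq_bigr => s _; by rewrite LcE.
pose w := v *m invmx (1%:M - Lc).
have hvw : v = w *m (1%:M - Lc) by rewrite /w mulmxKV.
have w0 : w != 0 by apply: contraNneq v0 => e; rewrite hvw e mul0mx.
have lam0 : lam != 0.
  by apply: contraTneq hl => ->; rewrite normc0 ler10.
have hw : w *m Uc + lam *: (w *m Lc) = lam *: w.
  have : w *m Uc = lam *: v by rewrite /w -mulmxA hv.
  by rewrite hvw mulmxBr mulmx1 scalerBr => ->; rewrite subrK.
move/eqP: w0; apply.
apply: (@key _ _ _ _ _ hn hs w lam (fun p q => if (q < p)%N then lam else 1)).
- by move=> p q; case: ifP => _; rewrite ?normc1.
- exact: lam0.
- move=> t; move/matrixP: hw => /(_ 0 t); rewrite /= !mxE => <-.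
  rewrite mulr_sumr -big_split /=; apply: eq_bigr => s _.
  rewrite LcE UcE; case: ifP => _; rewrite ?mul0r ?mul1r ?mulr0 ?addr0 ?add0r //.
  by rewrite mulrCA.
Qed.
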